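(* Let $d\ge5$ and let $Z=[z_1|\cdots|z_{2d}]$ be a totally positive real $4\times 2d$ matrix, with $M_i=\mathrm{span}(z_{2i-1},z_{2i})$ for $i=1,\dots,d$. Let $L^+$ and $L^-$ be the two lines in $\mathbb{P}^3$ meeting all of $M_1,M_2,M_3,M_4$. Then each of the configurations $(L^+,M_5,\dots,M_d)$ and $(L^-,M_5,\dots,M_d)$ is a positive configuration of lines; i.e. the four-mass box substitution maps $(M_1,\dots,M_d)\mapsto(L^\pm,M_5,\dots,M_d)$ are copositive.
   Context: A real $4\times n$ matrix is totally positive if all its $4\times4$ minors are positive. A tuple of lines $(N_1,\dots,N_m)$ in $\mathbb{P}^3$ is positive if there exist a totally positive $4\times n$ matrix $[y_1|\cdots|y_n]$ and indices $1=p_1<\dots<p_m\le n\le 2m$ with $N_i=\mathrm{span}(y_{p_i},y_{p_i+1})$, and $p_{i+1}=p_i+1$ whenever $N_i,N_{i+1}$ meet. *)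

(* Defs.v *)
From HB Require Import structures.
From mathcomp Require Import all_boot all_order all_algebra.
From mathcomp Require Import reals.

Set Implicit Arguments.
Unset Strict Implicit.
Unset Printing Implicit Defensive.

Import Order.TTheory GRing.Theory Num.Theory.
Local Open Scope ring_scope.

(* Points of P^3 are nonzero row vectors of R^4 up to scaling; a line in P^3
   is the row space of a 2 x 4 matrix of rank 2. *)

(* Entry in row k of the j-th column (0-based, nat index) of Y; 0 if j is out
   of range (never used out of range in the definitions below). *)
Definition ent (R : realFieldType) (n : nat) (Y : 'M[R]_(4, n)) (k : 'I_4)
    (j : nat) : R :=
  match (insub j : option 'I_n) with Some o => Y k o | None => 0 end.

Definition span2 (R : realFieldType) (n : nat) (Y : 'M[R]_(4, n))
    (j j' : nat) : 'M[R]_(2, 4) :=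
  \matrix_(r < 2, k < 4) (if val r == 0%N then ent Y k j else ent Y k j').

Definition totally_positive (R : realFieldType) (n : nat) (Y : 'M[R]_(4, n))
  : Prop :=
  forall f : 'I_4 -> 'I_n,
    (forall i j : 'I_4, (i < j)%N -> (f i < f j)%N) -> 0 < \det (colsub f Y).

Definition lines_meet (R : realFieldType) (A B : 'M[R]_(2, 4)) : Prop :=
  (0 < \rank (A :&: B)%MS)%N.

Definition positive_config (R : realFieldType) (m : nat)
    (N : nat -> 'M[R]_(2, 4)) : Prop :=
  exists (n : nat) (Y : 'M[R]_(4, n)) (p : nat -> nat),
    totally_positive Y /\
    ((0 < m)%N -> p 0%N = 0%N) /\
    (forall i, (i.+1 < m)%N -> (p i < p i.+1)%N) /\
    (forall i, (i < m)%N -> ((p i).+1 < n)%N) /\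
    (n <= 2 * m)%N /\
    (forall i, (i < m)%N -> (N i == span2 Y (p i) (p i).+1)%MS) /\
    (forall i, (i.+1 < m)%N -> lines_meet (N i) (N i.+1) ->
               p i.+1 = (p i).+1).

(* Main.v *)
Require Import Defs.
From HB Require Import structures.
From mathcomp Require Import all_boot all_order all_algebra.
From mathcomp Require Import reals.
From mathcomp Require Import ring lra.
From Stdlib Require Import FunctionalExtensionality Lia.
From mathcomp Require Import zify.
Set Implicit Arguments.
Unset Strict Implicit.
Unset Printing Implicit Defensive.
Import Order.TTheory GRing.Theory Num.Theory.
Local Open Scope ring_scope.

Section Alg.
Variable R : realType.
Definition vec := nat -> R.
Definition det3 (b c d : vec) (r1 r2 r3 : nat) : R :=
  b r1 * (c r2 * d r3 - c r3 * d r2) - b r2 * (c r1 * d r3 - c r3 * d r1)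
  + b r3 * (c r1 * d r2 - c r2 * d r1).
Definition det4 (a b c d : vec) : R :=
  a 0%N * det3 b c d 1 2 3 - a 1%N * det3 b c d 0 2 3 + a 2%N * det3 b c d 0 1 3
  - a 3%N * det3 b c d 0 1 2.
Definition lc (a b : R) (v w : vec) : vec := fun k => a * v k + b * w k.
Definition B (u : nat -> vec) i j k l := det4 (u i) (u j) (u k) (u l).
Definition TPn (u : nat -> vec) (n : nat) := forall i j k l,
  (i < j)%N -> (j < k)%N -> (k < l)%N -> (l < n)%N -> 0 < B u i j k l.
Definition Qf (u : nat -> vec) (x : vec) :=
  det4 x (u 0%N) (u 1%N) (u 3%N) * det4 x (u 2%N) (u 4%N) (u 5%N)
  - det4 x (u 0%N) (u 1%N) (u 2%N) * det4 x (u 3%N) (u 4%N) (u 5%N).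

Ltac dring := rewrite /B /det4 /det3 /lc; ring.

Lemma neg_aux (s6 s7 p6 p7 lam mu : R) :
  0 < s7 -> 0 < p7 -> s6 * p7 < s7 * p6 -> 0 <= lam -> (lam != 0) || (mu != 0) ->
  lam * p6 + mu * p7 <= 0 -> lam * s6 + mu * s7 < 0.
Proof.
move=> s7p p7p H lam0 nz Hphi.
have [lam0'|lamn0] := eqVneq lam 0.
  rewrite lam0' eqxx /= in nz Hphi *. rewrite mul0r add0r in Hphi *.
  have mu_le : mu <= 0 by nra.
  have mun : mu < 0 by rewrite lt_neqAle nz mu_le.
  nra.
have lamp : 0 < lam by rewrite lt_neqAle eq_sym lamn0 lam0.
have : (lam * s6 + mu * s7) * p7 < 0; last first.
  by move=> h; rewrite pmulr_llt0 // in h.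
have e : (lam * s6 + mu * s7) * p7 = lam * (s6 * p7 - s7 * p6) + s7 * (lam * p6 + mu * p7) by ring.
rewrite e.
have h1 : lam * (s6 * p7 - s7 * p6) < 0 by rewrite pmulr_rlt0 // subr_lt0.
have h2 : s7 * (lam * p6 + mu * p7) <= 0 by rewrite pmulr_rle0.
lra.
Qed.

Lemma bS_lin (a b c v w : vec) lam mu :
  det4 a b c (lc lam mu v w) = lam * det4 a b c v + mu * det4 a b c w.
Proof. dring. Qed.
Lemma det4_lin1 (a b c v w : vec) lam mu :
  det4 (lc lam mu v w) a b c = lam * det4 v a b c + mu * det4 w a b c.
Proof. dring. Qed.
Lemma det4_first_last (x a b c : vec) : det4 x a b c = - det4 a b c x.
Proof. dring. Qed.
Lemma cert_i (a0 a1 a2 a3 a4 x : vec) :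
  det4 a0 a1 a3 x * det4 a0 a2 a4 x =
  det4 a0 a1 a2 x * det4 a0 a3 a4 x + det4 a0 a1 a4 x * det4 a0 a2 a3 x.
Proof. dring. Qed.
Lemma cert_ii (a0 a2 a3 a4 a5 x : vec) :
  det4 a0 a3 a4 x * det4 a2 a4 a5 x - det4 a0 a2 a4 x * det4 a3 a4 a5 x =
  det4 a0 a4 a5 x * det4 a2 a3 a4 x.
Proof. dring. Qed.

Lemma X_pos (b012 b013 b014 b023 b024 b034 b045 b234 b245 b345 : R) :
  b013 * b024 = b012 * b034 + b014 * b023 ->
  b034 * b245 - b024 * b345 = b045 * b234 ->
  b012 < 0 -> b014 < 0 -> b023 < 0 -> b024 < 0 -> b045 < 0 -> b234 < 0 -> b245 < 0 ->
  0 < b013 * b245 - b012 * b345.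
Proof.
move=> e1 e2 h012 h014 h023 h024 h045 h234 h245.
have e : b024 * (b013 * b245 - b012 * b345) = b012 * (b045 * b234) + b014 * b023 * b245.
  have -> : b024 * (b013 * b245 - b012 * b345) = (b013 * b024) * b245 - b012 * (b024 * b345) by ring.
  rewrite e1.
  have -> : b024 * b345 = b034 * b245 - b045 * b234 by rewrite -e2; ring.
  ring.
have q1 : 0 < b045 * b234 by nra.
have p1 : b012 * (b045 * b234) < 0 by nra.
have q2 : 0 < b014 * b023 by nra.
have p2 : b014 * b023 * b245 < 0 by nra.
have : b024 * (b013 * b245 - b012 * b345) < 0 by rewrite e; lra.
nra.
Qed.

Lemma core (u : nat -> vec) (t1 t2 t3 : vec) lam mu :
  TPn u 8 ->
  0 < det4 (u 7%N) t1 t2 t3 ->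
  (forall i j k, (i, j, k) \in [:: (0,1,2); (0,1,3); (0,1,4); (0,2,3); (0,2,4); (0,4,5);
                                (2,3,4); (2,4,5); (3,4,5)]%N ->
     B u i j k 6 * det4 (u 7%N) t1 t2 t3 < B u i j k 7 * det4 (u 6%N) t1 t2 t3) ->
  0 <= lam -> (lam != 0) || (mu != 0) ->
  Qf u (lc lam mu (u 6%N) (u 7%N)) = 0 ->
  0 < det4 (lc lam mu (u 6%N) (u 7%N)) t1 t2 t3.
Proof.
move=> TP p7 HS lam0 nz HQ.
rewrite ltNge; apply/negP => Hle.
set x := lc lam mu (u 6%N) (u 7%N) in HQ Hle.
have neg : forall i j k, (i, j, k) \in [:: (0,1,2); (0,1,3); (0,1,4); (0,2,3); (0,2,4); (0,4,5);
                                (2,3,4); (2,4,5); (3,4,5)]%N ->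
     det4 (u i) (u j) (u k) x < 0.
  move=> i j k hin.
  rewrite /x bS_lin.
  apply: (neg_aux _ p7 (HS _ _ _ hin) lam0 nz).
    move: hin; rewrite !inE; repeat case/orP; move=> /eqP [-> -> ->]; apply: TP => //.
  by rewrite det4_lin1 in Hle.
have := @X_pos (det4 (u 0%N) (u 1%N) (u 2%N) x) (det4 (u 0%N) (u 1%N) (u 3%N) x)
  (det4 (u 0%N) (u 1%N) (u 4%N) x) (det4 (u 0%N) (u 2%N) (u 3%N) x)
  (det4 (u 0%N) (u 2%N) (u 4%N) x) (det4 (u 0%N) (u 3%N) (u 4%N) x)
  (det4 (u 0%N) (u 4%N) (u 5%N) x) (det4 (u 2%N) (u 3%N) (u 4%N) x)
  (det4 (u 2%N) (u 4%N) (u 5%N) x) (det4 (u 3%N) (u 4%N) (u 5%N) x)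
  (cert_i _ _ _ _ _ _) (cert_ii _ _ _ _ _ _).
have eQ : Qf u x = det4 (u 0%N) (u 1%N) (u 3%N) x * det4 (u 2%N) (u 4%N) (u 5%N) x -
   det4 (u 0%N) (u 1%N) (u 2%N) x * det4 (u 3%N) (u 4%N) (u 5%N) x.
  rewrite /Qf !(det4_first_last x); ring.
rewrite -eQ HQ ltxx.
have n012 := neg 0%N 1%N 2%N isT. have n014 := neg 0%N 1%N 4%N isT.
have n023 := neg 0%N 2%N 3%N isT. have n024 := neg 0%N 2%N 4%N isT.
have n045 := neg 0%N 4%N 5%N isT. have n234 := neg 2%N 3%N 4%N isT.
have n245 := neg 2%N 4%N 5%N isT.
by move/(_ n012 n014 n023 n024 n045 n234 n245).
Qed.
Lemma step0 (u : nat -> vec) : TPn u 9 -> B u 0 1 3 6 * B u 0 1 2 7 < B u 0 1 2 6 * B u 0 1 3 7.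
Proof.
move=> TP.
have e : B u 0 1 3 6 * B u 0 1 2 7 - B u 0 1 2 6 * B u 0 1 3 7 = - (B u 0 1 2 3 * B u 0 1 6 7) by dring.
have p1 : 0 < B u 0 1 2 3 by apply: TP.
have p2 : 0 < B u 0 1 6 7 by apply: TP.
have : 0 < B u 0 1 2 3 * B u 0 1 6 7 by apply: mulr_gt0.
lra.
Qed.

Lemma step1 (u : nat -> vec) : TPn u 9 -> B u 0 1 4 6 * B u 0 1 2 7 < B u 0 1 2 6 * B u 0 1 4 7.
Proof.
move=> TP.
have e : B u 0 1 4 6 * B u 0 1 2 7 - B u 0 1 2 6 * B u 0 1 4 7 = - (B u 0 1 2 4 * B u 0 1 6 7) by dring.
have p1 : 0 < B u 0 1 2 4 by apply: TP.
have p2 : 0 < B u 0 1 6 7 by apply: TP.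
have : 0 < B u 0 1 2 4 * B u 0 1 6 7 by apply: mulr_gt0.
lra.
Qed.

Lemma step2 (u : nat -> vec) : TPn u 9 -> B u 0 2 3 6 * B u 0 1 2 7 < B u 0 1 2 6 * B u 0 2 3 7.
Proof.
move=> TP.
have e : B u 0 2 3 6 * B u 0 1 2 7 - B u 0 1 2 6 * B u 0 2 3 7 = - (B u 0 1 2 3 * B u 0 2 6 7) by dring.
have p1 : 0 < B u 0 1 2 3 by apply: TP.
have p2 : 0 < B u 0 2 6 7 by apply: TP.
have : 0 < B u 0 1 2 3 * B u 0 2 6 7 by apply: mulr_gt0.
lra.
Qed.

Lemma step3 (u : nat -> vec) : TPn u 9 -> B u 0 2 4 6 * B u 0 1 2 7 < B u 0 1 2 6 * B u 0 2 4 7.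
Proof.
move=> TP.
have e : B u 0 2 4 6 * B u 0 1 2 7 - B u 0 1 2 6 * B u 0 2 4 7 = - (B u 0 1 2 4 * B u 0 2 6 7) by dring.
have p1 : 0 < B u 0 1 2 4 by apply: TP.
have p2 : 0 < B u 0 2 6 7 by apply: TP.
have : 0 < B u 0 1 2 4 * B u 0 2 6 7 by apply: mulr_gt0.
lra.
Qed.

Lemma step4 (u : nat -> vec) : TPn u 9 -> B u 0 4 5 6 * B u 0 1 4 7 < B u 0 1 4 6 * B u 0 4 5 7.
Proof.
move=> TP.
have e : B u 0 4 5 6 * B u 0 1 4 7 - B u 0 1 4 6 * B u 0 4 5 7 = - (B u 0 1 4 5 * B u 0 4 6 7) by dring.
have p1 : 0 < B u 0 1 4 5 by apply: TP.
have p2 : 0 < B u 0 4 6 7 by apply: TP.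
have : 0 < B u 0 1 4 5 * B u 0 4 6 7 by apply: mulr_gt0.
lra.
Qed.

Lemma step5 (u : nat -> vec) : TPn u 9 -> B u 2 3 4 6 * B u 0 2 3 7 < B u 0 2 3 6 * B u 2 3 4 7.
Proof.
move=> TP.
have e : B u 2 3 4 6 * B u 0 2 3 7 - B u 0 2 3 6 * B u 2 3 4 7 = - (B u 0 2 3 4 * B u 2 3 6 7) by dring.
have p1 : 0 < B u 0 2 3 4 by apply: TP.
have p2 : 0 < B u 2 3 6 7 by apply: TP.
have : 0 < B u 0 2 3 4 * B u 2 3 6 7 by apply: mulr_gt0.
lra.
Qed.

Lemma step6 (u : nat -> vec) : TPn u 9 -> B u 2 4 5 6 * B u 0 2 4 7 < B u 0 2 4 6 * B u 2 4 5 7.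
Proof.
move=> TP.
have e : B u 2 4 5 6 * B u 0 2 4 7 - B u 0 2 4 6 * B u 2 4 5 7 = - (B u 0 2 4 5 * B u 2 4 6 7) by dring.
have p1 : 0 < B u 0 2 4 5 by apply: TP.
have p2 : 0 < B u 2 4 6 7 by apply: TP.
have : 0 < B u 0 2 4 5 * B u 2 4 6 7 by apply: mulr_gt0.
lra.
Qed.

Lemma step7 (u : nat -> vec) : TPn u 9 -> B u 3 4 5 6 * B u 0 4 5 7 < B u 0 4 5 6 * B u 3 4 5 7.
Proof.
move=> TP.
have e : B u 3 4 5 6 * B u 0 4 5 7 - B u 0 4 5 6 * B u 3 4 5 7 = - (B u 0 3 4 5 * B u 4 5 6 7) by dring.
have p1 : 0 < B u 0 3 4 5 by apply: TP.
have p2 : 0 < B u 4 5 6 7 by apply: TP.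
have : 0 < B u 0 3 4 5 * B u 4 5 6 7 by apply: mulr_gt0.
lra.
Qed.

Lemma step8 (u : nat -> vec) : TPn u 9 -> B u 0 1 2 6 * B u 0 1 7 8 < B u 0 1 6 8 * B u 0 1 2 7.
Proof.
move=> TP.
have e : B u 0 1 2 6 * B u 0 1 7 8 - B u 0 1 6 8 * B u 0 1 2 7 = - (B u 0 1 2 8 * B u 0 1 6 7) by dring.
have p1 : 0 < B u 0 1 2 8 by apply: TP.
have p2 : 0 < B u 0 1 6 7 by apply: TP.
have : 0 < B u 0 1 2 8 * B u 0 1 6 7 by apply: mulr_gt0.
lra.
Qed.

Lemma step9 (u : nat -> vec) : TPn u 11 -> B u 0 1 6 8 * B u 0 7 8 9 < B u 0 6 8 9 * B u 0 1 7 8.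
Proof.
move=> TP.
have e : B u 0 1 6 8 * B u 0 7 8 9 - B u 0 6 8 9 * B u 0 1 7 8 = - (B u 0 1 8 9 * B u 0 6 7 8) by dring.
have p1 : 0 < B u 0 1 8 9 by apply: TP.
have p2 : 0 < B u 0 6 7 8 by apply: TP.
have : 0 < B u 0 1 8 9 * B u 0 6 7 8 by apply: mulr_gt0.
lra.
Qed.

Lemma step10 (u : nat -> vec) : TPn u 11 -> B u 0 6 8 9 * B u 7 8 9 10 < B u 6 8 9 10 * B u 0 7 8 9.
Proof.
move=> TP.
have e : B u 0 6 8 9 * B u 7 8 9 10 - B u 6 8 9 10 * B u 0 7 8 9 = - (B u 0 8 9 10 * B u 6 7 8 9) by dring.
have p1 : 0 < B u 0 8 9 10 by apply: TP.
have p2 : 0 < B u 6 7 8 9 by apply: TP.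
have : 0 < B u 0 8 9 10 * B u 6 7 8 9 by apply: mulr_gt0.
lra.
Qed.
Lemma rtrans (a1 b1 a2 b2 a3 b3 : R) : 0 < b1 -> 0 < b2 -> 0 < b3 ->
  a1 * b2 < a2 * b1 -> a2 * b3 < a3 * b2 -> a1 * b3 < a3 * b1.
Proof.
move=> p1 p2 p3 h1 h2.
have h1' : a1 * b2 * b3 < a2 * b1 * b3 by rewrite ltr_pM2r.
have h2' : a2 * b3 * b1 < a3 * b2 * b1 by rewrite ltr_pM2r.
have e1 : a2 * b1 * b3 = a2 * b3 * b1 by ring.
have : (a1 * b3) * b2 < (a3 * b1) * b2.
  have -> : a1 * b3 * b2 = a1 * b2 * b3 by ring.
  have -> : a3 * b1 * b2 = a3 * b2 * b1 by ring.
  rewrite e1 in h1'. exact: lt_trans h1' h2'.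
by rewrite ltr_pM2r.
Qed.

Lemma rtrans' (a1 b1 a2 b2 a3 b3 : R) :
  a1 * b2 < a2 * b1 -> a2 * b3 < a3 * b2 -> 0 < b1 -> 0 < b2 -> 0 < b3 -> a1 * b3 < a3 * b1.
Proof. move=> h1 h2 p1 p2 p3; exact: (rtrans p1 p2 p3 h1 h2). Qed.

Lemma TPn_mono u n m : (m <= n)%N -> TPn u n -> TPn u m.
Proof. rewrite /TPn => le TP i j k l h1 h2 h3 h4; apply: TP => //; exact: leq_trans h4 le. Qed.

Lemma chainA2 (u : nat -> vec) : TPn u 9 ->
  forall i j k, (i, j, k) \in [:: (0,1,2); (0,1,3); (0,1,4); (0,2,3); (0,2,4); (0,4,5);
                                (2,3,4); (2,4,5); (3,4,5)]%N ->
     B u i j k 6 * B u 0 1 7 8 < B u 0 1 6 8 * B u i j k 7.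
Proof.
move=> TP i j k.
have s0 := step0 TP. have s1 := step1 TP. have s2 := step2 TP. have s3 := step3 TP.
have s4 := step4 TP. have s5 := step5 TP. have s6 := step6 TP. have s7 := step7 TP.
have s8 := step8 TP.
rewrite !inE; repeat case/orP; move=> /eqP [-> -> ->].
- exact: s8.
- by apply: (rtrans' s0 s8); apply: TP.
- by apply: (rtrans' s1 s8); apply: TP.
- by apply: (rtrans' s2 s8); apply: TP.
- by apply: (rtrans' s3 s8); apply: TP.
- have t : B u 0 1 4 6 * B u 0 1 7 8 < B u 0 1 6 8 * B u 0 1 4 7 by apply: (rtrans' s1 s8); apply: TP.
  by apply: (rtrans' s4 t); apply: TP.
- have t : B u 0 2 3 6 * B u 0 1 7 8 < B u 0 1 6 8 * B u 0 2 3 7 by apply: (rtrans' s2 s8); apply: TP.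
  by apply: (rtrans' s5 t); apply: TP.
- have t : B u 0 2 4 6 * B u 0 1 7 8 < B u 0 1 6 8 * B u 0 2 4 7 by apply: (rtrans' s3 s8); apply: TP.
  by apply: (rtrans' s6 t); apply: TP.
- have t : B u 0 1 4 6 * B u 0 1 7 8 < B u 0 1 6 8 * B u 0 1 4 7 by apply: (rtrans' s1 s8); apply: TP.
  have t2 : B u 0 4 5 6 * B u 0 1 7 8 < B u 0 1 6 8 * B u 0 4 5 7 by apply: (rtrans' s4 t); apply: TP.
  by apply: (rtrans' s7 t2); apply: TP.
Qed.
Lemma lemA2 (u : nat -> vec) lam mu : TPn u 9 -> 0 <= lam -> (lam != 0) || (mu != 0) ->
  Qf u (lc lam mu (u 6%N) (u 7%N)) = 0 ->
  0 < det4 (lc lam mu (u 6%N) (u 7%N)) (u 0%N) (u 1%N) (u 8%N).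
Proof.
move=> TP lam0 nz HQ.
have e7 : det4 (u 7%N) (u 0%N) (u 1%N) (u 8%N) = B u 0 1 7 8 by dring.
have e6 : det4 (u 6%N) (u 0%N) (u 1%N) (u 8%N) = B u 0 1 6 8 by dring.
apply: core; last first.
- exact: HQ.
- exact: nz.
- exact: lam0.
- move=> i j k hin; rewrite e7 e6.
  have := chainA2 TP hin.
  by rewrite [X in _ < X -> _]mulrC.
- by rewrite e7; apply: TP.
- exact: TPn_mono TP.
Qed.

Lemma lemA (u : nat -> vec) lam mu : TPn u 11 -> 0 <= lam -> (lam != 0) || (mu != 0) ->
  Qf u (lc lam mu (u 6%N) (u 7%N)) = 0 ->
  0 < det4 (lc lam mu (u 6%N) (u 7%N)) (u 8%N) (u 9%N) (u 10%N).
Proof.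
move=> TP lam0 nz HQ.
have TP9 : TPn u 9 by exact: TPn_mono TP.
apply: core; last first.
- exact: HQ.
- exact: nz.
- exact: lam0.
- move=> i j k hin.
  have h := chainA2 TP9 hin.
  have s9 := step9 TP. have s10 := step10 TP.
  have hS7 : 0 < B u i j k 7.
    by move: hin; rewrite !inE; repeat case/orP; move=> /eqP [-> -> ->]; apply: TP.
  have t : B u i j k 6 * B u 0 7 8 9 < B u 0 6 8 9 * B u i j k 7.
    by apply: (rtrans' h s9) => //; apply: TP.
  have t2 : B u i j k 6 * B u 7 8 9 10 < B u 6 8 9 10 * B u i j k 7.
    by apply: (rtrans' t s10) => //; apply: TP.
  by rewrite [X in _ < X]mulrC.
- by apply: TP.
- exact: TPn_mono TP.
Qed.
Lemma lemC (u : nat -> vec) mu lam lp mp :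
  TPn u 10 -> 0 <= lam -> 0 <= lp ->
  0 < det4 (lc lp mp (u 6%N) (u 7%N)) (u 0%N) (u 1%N) (u 8%N) ->
  0 < det4 (lc lp mp (u 6%N) (u 7%N)) (u 0%N) (u 1%N) (u 9%N) ->
  0 < det4 (lc mu lam (u 0%N) (u 1%N)) (u 6%N) (u 7%N) (u 8%N) ->
  0 < det4 (lc mu lam (u 0%N) (u 1%N)) (u 6%N) (u 7%N) (u 9%N) ->
  0 < det4 (lc mu lam (u 0%N) (u 1%N)) (lc lp mp (u 6%N) (u 7%N)) (u 8%N) (u 9%N).
Proof.
set x := lc mu lam (u 0%N) (u 1%N); set y := lc lp mp (u 6%N) (u 7%N).
move=> TP lam0 lp0 Ua Ub Va Vb.
set UA := det4 y _ _ (u 8%N) in Ua *. set UB := det4 y _ _ (u 9%N) in Ub *.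
set VA := det4 x _ _ (u 8%N) in Va *. set VB := det4 x _ _ (u 9%N) in Vb *.
have c4 : UA * VB - UB * VA = B u 0 1 6 7 * det4 x y (u 8%N) (u 9%N) by rewrite /UA /UB /VA /VB /x /y; dring.
have c1 : UA * B u 0 1 7 9 - UB * B u 0 1 7 8 = lp * (B u 0 1 6 7 * B u 0 1 8 9)
  by rewrite /UA /UB /y; dring.
have c2 : VA * B u 0 6 7 9 - VB * B u 0 6 7 8 = - (lam * (B u 0 1 6 7 * B u 6 7 8 9))
  by rewrite /VA /VB /x; dring.
have c3 : B u 0 1 7 8 * B u 0 6 7 9 - B u 0 1 7 9 * B u 0 6 7 8 = B u 0 1 6 7 * B u 0 7 8 9
  by dring.
have p0167 : 0 < B u 0 1 6 7 by apply: TP.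
have p0189 : 0 < B u 0 1 8 9 by apply: TP.
have p6789 : 0 < B u 6 7 8 9 by apply: TP.
have p0789 : 0 < B u 0 7 8 9 by apply: TP.
have pBb : 0 < B u 0 1 7 9 by apply: TP.
have pBa : 0 < B u 0 1 7 8 by apply: TP.
have pCb : 0 < B u 0 6 7 9 by apply: TP.
have pCa : 0 < B u 0 6 7 8 by apply: TP.
set Ba := B u 0 1 7 8 in c1 c3 pBa. set Bb := B u 0 1 7 9 in c1 c3 pBb.
set Ca := B u 0 6 7 8 in c2 c3 pCa. set Cb := B u 0 6 7 9 in c2 c3 pCb.
have h1 : UB * Ba <= UA * Bb.
  have : 0 <= lp * (B u 0 1 6 7 * B u 0 1 8 9) by apply: mulr_ge0 => //; apply: mulr_ge0; apply: ltW.
  lra.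
have h2 : VA * Cb <= VB * Ca.
  have : 0 <= lam * (B u 0 1 6 7 * B u 6 7 8 9) by apply: mulr_ge0 => //; apply: mulr_ge0; apply: ltW.
  lra.
have h3 : Bb * Ca < Ba * Cb.
  have : 0 < B u 0 1 6 7 * B u 0 7 8 9 by apply: mulr_gt0.
  lra.
have k1 : UB * Ba * (VB * Cb) <= UA * Bb * (VB * Cb) by rewrite ler_pM2r // mulr_gt0.
have k2 : Bb * Ca * (UB * VB) < Ba * Cb * (UB * VB) by rewrite ltr_pM2r // mulr_gt0.
have k3 : VA * Cb * (UB * Bb) <= VB * Ca * (UB * Bb) by rewrite ler_pM2r // mulr_gt0.
have key : (UB * VA) * (Bb * Cb) < (UA * VB) * (Bb * Cb).
  have e1 : UB * Ba * (VB * Cb) = Ba * Cb * (UB * VB) by ring.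
  have e2 : Bb * Ca * (UB * VB) = VB * Ca * (UB * Bb) by ring.
  have e3 : VA * Cb * (UB * Bb) = (UB * VA) * (Bb * Cb) by ring.
  have e4 : UA * Bb * (VB * Cb) = (UA * VB) * (Bb * Cb) by ring.
  lra.
have key2 : UB * VA < UA * VB by rewrite -(ltr_pM2r (mulr_gt0 pBb pCb)).
have : 0 < B u 0 1 6 7 * det4 x y (u 8%N) (u 9%N) by rewrite -c4; lra.
by rewrite pmulr_rgt0.
Qed.
Definition neg (v : vec) : vec := fun k => - v k.

Lemma Qzero_L (u : nat -> vec) (r0 r1 : vec) a b c d e f :
  (e != 0) || (f != 0) -> lc c d r0 r1 = lc e f (u 2%N) (u 3%N) ->
  det4 r0 r1 (u 0%N) (u 1%N) = 0 -> det4 r0 r1 (u 4%N) (u 5%N) = 0 ->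
  Qf u (lc a b r0 r1) = 0.
Proof.
move=> nz ew h01 h45.
have E1 : det4 (lc a b r0 r1) (u 0%N) (u 1%N) (lc c d r0 r1) = 0.
  have -> : det4 (lc a b r0 r1) (u 0%N) (u 1%N) (lc c d r0 r1) =
     (a * d - b * c) * det4 r0 r1 (u 0%N) (u 1%N) by dring.
  by rewrite h01 mulr0.
have E2 : det4 (lc a b r0 r1) (lc c d r0 r1) (u 4%N) (u 5%N) = 0.
  have -> : det4 (lc a b r0 r1) (lc c d r0 r1) (u 4%N) (u 5%N) =
     (a * d - b * c) * det4 r0 r1 (u 4%N) (u 5%N) by dring.
  by rewrite h45 mulr0.
rewrite ew in E1 E2.
set x := lc a b r0 r1 in E1 E2 *.
have e1 : e * det4 x (u 0%N) (u 1%N) (u 2%N) + f * det4 x (u 0%N) (u 1%N) (u 3%N) = 0.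
  by rewrite -E1; dring.
have e2 : e * det4 x (u 2%N) (u 4%N) (u 5%N) + f * det4 x (u 3%N) (u 4%N) (u 5%N) = 0.
  by rewrite -E2; dring.
rewrite /Qf.
set A := det4 x _ _ (u 2%N) in e1 *. set Bq := det4 x _ _ (u 3%N) in e1 *.
set C := det4 x (u 2%N) _ _ in e2 *. set D := det4 x (u 3%N) _ _ in e2 *.
have h1 : e * (Bq * C - A * D) = 0.
  have -> : e * (Bq * C - A * D) = Bq * (e * C + f * D) - D * (e * A + f * Bq) by ring.
  by rewrite e1 e2 !mulr0 subr0.
have h2 : f * (Bq * C - A * D) = 0.
  have -> : f * (Bq * C - A * D) = C * (e * A + f * Bq) - A * (e * C + f * D) by ring.
  by rewrite e1 e2 !mulr0 subr0.
case/orP: nz => nz.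
  by move/eqP: h1; rewrite mulf_eq0 (negbTE nz) => /eqP.
by move/eqP: h2; rewrite mulf_eq0 (negbTE nz) => /eqP.
Qed.

Lemma meet_det (r0 r1 p q : vec) y0 y1 c c' :
  (y0 != 0) || (y1 != 0) -> lc y0 y1 r0 r1 = lc c c' p q -> det4 r0 r1 p q = 0.
Proof.
move=> nz e.
have h0 : y0 * det4 r0 r1 p q = 0.
  have -> : y0 * det4 r0 r1 p q = det4 (lc y0 y1 r0 r1) r1 p q by dring.
  rewrite e; dring.
have h1 : y1 * det4 r0 r1 p q = 0.
  have -> : y1 * det4 r0 r1 p q = - det4 (lc y0 y1 r0 r1) r0 p q by dring.
  rewrite e; dring.
case/orP: nz => nz.
  by move/eqP: h0; rewrite mulf_eq0 (negbTE nz) => /eqP.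
by move/eqP: h1; rewrite mulf_eq0 (negbTE nz) => /eqP.
Qed.

Lemma indep2 (a b c d : vec) al be :
  (al != 0) || (be != 0) -> det4 a b c d != 0 -> lc al be a b = (fun _ => 0) -> False.
Proof.
move=> nz dn e.
have h0 : al * det4 a b c d = 0.
  have -> : al * det4 a b c d = det4 (lc al be a b) b c d by dring.
  rewrite e; dring.
have h1 : be * det4 a b c d = 0.
  have -> : be * det4 a b c d = det4 a (lc al be a b) c d by dring.
  rewrite e; dring.
case/orP: nz => nz.
  by move/eqP: h0; rewrite mulf_eq0 (negbTE nz) (negbTE dn).
by move/eqP: h1; rewrite mulf_eq0 (negbTE nz) (negbTE dn).
Qed.

Lemma nonzero_coef (r0 r1 p q s t : vec) y y' c c' :
  (c != 0) || (c' != 0) -> det4 p q s t != 0 -> lc c c' p q = lc y y' r0 r1 ->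
  (y != 0) || (y' != 0).
Proof.
move=> nz dn e; case: (boolP ((y != 0) || (y' != 0))) => // /norP [/negPn/eqP y0 /negPn/eqP y1].
exfalso; apply: (indep2 nz dn); rewrite e y0 y1 /lc.
by apply: functional_extensionality => k; rewrite !mul0r addr0.
Qed.
Lemma m4 (a b c d : vec) : det4 (neg a) (neg b) (neg c) (neg d) = det4 d c b a.
Proof. rewrite /neg; dring. Qed.
Lemma m3 (a b c d : vec) : det4 (neg a) (neg b) (neg c) d = det4 c b a d.
Proof. rewrite /neg; dring. Qed.
Lemma m2 (a b c d : vec) : det4 (neg a) (neg b) c d = det4 b a d c.
Proof. rewrite /neg; dring. Qed.
Lemma m1 (a b c d : vec) : det4 (neg a) b c d = det4 a d c b.
Proof. rewrite /neg; dring. Qed.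

Definition TPz (z : nat -> vec) (N : nat) := forall j1 j2 j3 j4,
  (j1 < j2)%N -> (j2 < j3)%N -> (j3 < j4)%N -> (j4 < N)%N ->
  0 < det4 (z j1) (z j2) (z j3) (z j4).

Lemma TP_frame (z : nat -> vec) N (g : nat -> nat) n : TPz z N ->
  (forall i j, (i < j)%N -> (j < n)%N -> (g i < g j)%N) -> (forall i, (i < n)%N -> (g i < N)%N) ->
  TPn (fun i => z (g i)) n.
Proof.
move=> TP gm gN i j k l h1 h2 h3 h4; rewrite /B.
apply: TP; [apply: gm | apply: gm | apply: gm | apply: gN] => //.
- by apply: ltn_trans h4; apply: ltn_trans h3.
- exact: ltn_trans h3 h4.
Qed.

Lemma TP_twist (z : nat -> vec) N (h : nat -> nat) n : TPz z N -> (n <= 11)%N -> (8 <= N)%N ->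
  (forall i j, (8 <= i)%N -> (i < j)%N -> (j < n)%N -> (h j < h i)%N) ->
  (forall i, (8 <= i)%N -> (i < n)%N -> (8 <= h i)%N && (h i < N)%N) ->
  TPn (fun i => if (i < 8)%N then neg (z (7 - i)%N) else z (h i)) n.
Proof.
move=> TP n11 N8 hm hN i j k l h1 h2 h3 h4; rewrite /B /=.
case: (ltnP l 8) => hl.
  have hk : (k < 8)%N by lia.
  have hj : (j < 8)%N by lia.
  have hi : (i < 8)%N by lia.
  rewrite hk hj hi m4; apply: TP; lia.
case: (ltnP k 8) => hk.
  have hj : (j < 8)%N by lia.
  have hi : (i < 8)%N by lia.
  rewrite hj hi m3.
  have /andP [a1 a2] := hN l hl h4.
  apply: TP; lia.
case: (ltnP j 8) => hj.
  have hi : (i < 8)%N by lia.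
  rewrite hi m2.
  have /andP [a1 a2] := hN l hl h4.
  have /andP [b1 b2] := hN k hk (ltn_trans h3 h4).
  have e0 := hm k l hk h3 h4.
  apply: TP; lia.
case: (ltnP i 8) => hi.
  rewrite m1.
  have /andP [a1 a2] := hN l hl h4.
  have /andP [b1 b2] := hN k hk (ltn_trans h3 h4).
  have /andP [c1 c2] := hN j hj (ltn_trans h2 (ltn_trans h3 h4)).
  have e1 := hm k l hk h3 h4.
  have e2 := hm j k hj h2 (ltn_trans h3 h4).
  apply: TP; lia.
exfalso; lia.
Qed.
End Alg.
Ltac dring := rewrite /B /det4 /det3 /lc /neg; ring.
Section Glue0.
Variable R : realType.

Lemma meet_vec (A B : 'M[R]_(2,4)) : lines_meet A B ->
  exists v : 'rV[R]_4, v != 0 /\ (v <= A)%MS /\ (v <= B)%MS.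
Proof.
rewrite /lines_meet lt0n mxrank_eq0 => nz.
have [r Hr] : exists r, row r (A :&: B)%MS != 0.
  apply/existsP; apply: contraR nz => /existsPn H.
  apply/eqP/row_matrixP => r; rewrite row0; exact/eqP/negPn/(H r).
exists (row r (A :&: B)%MS); split => //; split.
  exact: submx_trans (row_sub r _) (capmxSl _ _).
exact: submx_trans (row_sub r _) (capmxSr _ _).
Qed.

Lemma sub_span2 n (Y : 'M[R]_(4,n)) j j' (v : 'rV[R]_4) : (v <= span2 Y j j')%MS ->
  exists c c', forall k : 'I_4, v 0 k = c * ent Y k j + c' * ent Y k j'.
Proof.
case/submxP => x ->; exists (x 0 ord0), (x 0 (lift ord0 ord0)) => k.
rewrite !mxE big_ord_recl big_ord1 !mxE /=.
done.
Qed.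

Lemma sub_rows (L : 'M[R]_(2,4)) (v : 'rV[R]_4) : (v <= L)%MS ->
  exists y y', forall k : 'I_4, v 0 k = y * L ord0 k + y' * L (inord 1) k.
Proof.
case/submxP => x ->; exists (x 0 ord0), (x 0 (lift ord0 ord0)) => k.
rewrite !mxE big_ord_recl big_ord1 /=.
have -> : lift ord0 ord0 = inord 1 :> 'I_2 by apply: val_inj; rewrite /= inordK.
done.
Qed.
End Glue0.
Section Glue.
Variable R : realType.

Lemma det4E (A : 'M[R]_4) :
  \det A = det4 (fun k => A (inord k) (inord 0)) (fun k => A (inord k) (inord 1))
                 (fun k => A (inord k) (inord 2)) (fun k => A (inord k) (inord 3)).
Proof.
set a := fun r c => A (inord r) (inord c).
have E : forall i j, A i j = a (val i) (val j) by move=> i j; rewrite /a !inord_val.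
rewrite (expand_det_col _ ord0) !big_ord_recl big_ord0 /cofactor.
rewrite !(expand_det_col _ ord0) !big_ord_recl !big_ord0 /cofactor.
rewrite !(expand_det_col _ ord0) !big_ord_recl !big_ord0 /cofactor.
rewrite !det_mx11 !mxE !E /=.
rewrite /det4 /det3 /a /=.
ring.
Qed.

Definition zc n (Y : 'M[R]_(4, n)) (j : nat) : vec R := fun k => ent Y (inord k) j.

Lemma ent_val n (Y : 'M[R]_(4, n)) k (o : 'I_n) : ent Y k (val o) = Y k o.
Proof. by rewrite /ent valK. Qed.

Lemma ent_ord n (Y : 'M[R]_(4, n)) k j (h : (j < n)%N) : ent Y k j = Y k (Ordinal h).
Proof. by rewrite /ent insubT. Qed.

Lemma detcolsub n (Y : 'M[R]_(4, n)) (f : 'I_4 -> 'I_n) :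
  \det (colsub f Y) = det4 (zc Y (f (inord 0))) (zc Y (f (inord 1)))
                           (zc Y (f (inord 2))) (zc Y (f (inord 3))).
Proof.
rewrite det4E /zc.
by congr det4; apply: functional_extensionality => k; rewrite mxE ent_val.
Qed.

Lemma TPz_of_TP n (Y : 'M[R]_(4, n)) : totally_positive Y -> TPz (zc Y) n.
Proof.
move=> TP j1 j2 j3 j4 h1 h2 h3 h4.
pose s := [:: j1; j2; j3; j4].
have hs : forall c : 'I_4, (nth 0 s c < n)%N.
  by case=> [[|[|[|[|//]]]] hc] /=; lia.
pose f := fun c : 'I_4 => (Ordinal (hs c) : 'I_n).
have := TP f.
rewrite detcolsub.
have -> : (f (inord 0) : nat) = j1 by rewrite /f /= inordK.
have -> : (f (inord 1) : nat) = j2 by rewrite /f /= inordK.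
have -> : (f (inord 2) : nat) = j3 by rewrite /f /= inordK.
have -> : (f (inord 3) : nat) = j4 by rewrite /f /= inordK.
apply.
by case=> [[|[|[|[|//]]]] hc]; case=> [[|[|[|[|//]]]] hd] //= _; lia.
Qed.

Lemma indep4 (a b p q : vec R) c c' e e' :
  (c != 0) || (c' != 0) -> det4 a b p q != 0 -> lc c c' a b = lc e e' p q -> False.
Proof.
move=> nz dn ee.
have h0 : c * det4 a b p q = 0.
  have -> : c * det4 a b p q = det4 (lc c c' a b) b p q by dring.
  rewrite ee; dring.
have h1 : c' * det4 a b p q = 0.
  have -> : c' * det4 a b p q = det4 a (lc c c' a b) p q by dring.
  rewrite ee; dring.
case/orP: nz => nz.
  by move/eqP: h0; rewrite mulf_eq0 (negbTE nz) (negbTE dn).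
by move/eqP: h1; rewrite mulf_eq0 (negbTE nz) (negbTE dn).
Qed.

Lemma span2_vec n (Y : 'M[R]_(4, n)) j j' (v : 'rV[R]_4) : v != 0 -> (v <= span2 Y j j')%MS ->
  exists c c', ((c != 0) || (c' != 0)) /\ (fun k => v 0 (inord k)) = lc c c' (zc Y j) (zc Y j').
Proof.
move=> nz /sub_span2 [c [c' E]]; exists c, c'; split.
  apply: contraNT nz => /norP [/negPn/eqP c0 /negPn/eqP c0'].
  by apply/eqP/matrixP => i k; rewrite ord1 E c0 c0' !mxE !mul0r addr0.
by rewrite /lc /zc; apply: functional_extensionality => k; rewrite E.
Qed.

Lemma not_meet n (Y : 'M[R]_(4, n)) j : TPz (zc Y) n -> (j.+3 < n)%N ->
  ~ lines_meet (span2 Y j j.+1) (span2 Y j.+2 j.+3).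
Proof.
move=> TP hj /meet_vec [v [nz [s1 s2]]].
have [c [c' [nzc e1]]] := span2_vec nz s1.
have [e [e' [_ e2]]] := span2_vec nz s2.
have dp : 0 < det4 (zc Y j) (zc Y j.+1) (zc Y j.+2) (zc Y j.+3) by apply: TP => //.
apply: (indep4 nzc _ (etrans (esym e1) e2)).
by rewrite gt_eqF.
Qed.

Lemma meet_eqmx (A A' B B' : 'M[R]_(2, 4)) : (A == A')%MS -> (B == B')%MS ->
  lines_meet A B -> lines_meet A' B'.
Proof.
move=> /andP [hA _] /andP [hB _] h.
move: h; rewrite /lines_meet => h.
apply: leq_trans h _; apply: mxrankS; exact: capmxS.
Qed.
End Glue.

Section Main.
Variable R : realType.

Definition frg (a b c : nat) (i : nat) : nat :=
  if (i < 8)%N then i else if i == 8 then a else if i == 9 then b else c.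
Definition frh (a b c : nat) (i : nat) : nat := if i == 8 then c else if i == 9 then b else a.

Lemma frg_mono a b c n : (8 <= a)%N -> ((n <= 9)%N || (a < b)%N) -> ((n <= 10)%N || (b < c)%N) ->
  (n <= 11)%N -> forall i j, (i < j)%N -> (j < n)%N -> (frg a b c i < frg a b c j)%N.
Proof.
move=> ha hab hbc hn i j hij hjn; rewrite /frg.
repeat case: ifP => ?; lia.
Qed.

Lemma frg_bnd a b c n N : (8 <= N)%N -> (a < N)%N -> (b < N)%N -> (c < N)%N ->
  forall i, (i < n)%N -> (frg a b c i < N)%N.
Proof. move=> hN ha hb hc i hi; rewrite /frg; repeat case: ifP => ?; lia. Qed.

Lemma frh_mono a b c n : ((n <= 9)%N || (b < c)%N) -> ((n <= 10)%N || (a < b)%N) -> (n <= 11)%N ->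
  forall i j, (8 <= i)%N -> (i < j)%N -> (j < n)%N -> (frh a b c j < frh a b c i)%N.
Proof. move=> hab hbc hn i j hi hij hjn; rewrite /frh; repeat case: ifP => ?; lia. Qed.

Lemma frh_bnd a b c n N : (8 <= a)%N -> (8 <= b)%N -> (8 <= c)%N -> (a < N)%N -> (b < N)%N -> (c < N)%N ->
  forall i, (8 <= i)%N -> (i < n)%N -> (8 <= frh a b c i)%N && (frh a b c i < N)%N.
Proof. move=> h1 h2 h3 h4 h5 h6 i hi hin; rewrite /frh; repeat case: ifP => ?; apply/andP; split; lia. Qed.

Lemma normalize_pos (p q r0 r1 : vec R) :
  (exists c c' y y', ((c != 0) || (c' != 0)) /\ lc c c' p q = lc y y' r0 r1) ->
  exists c c' y y', [/\ ((c != 0) || (c' != 0)), lc c c' p q = lc y y' r0 r1 & 0 <= c].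
Proof.
move=> [c [c' [y [y' [nz e]]]]].
case: (lerP 0 c) => hc; first by exists c, c', y, y'.
exists (-c), (-c'), (-y), (-y'); split.
- by rewrite !oppr_eq0.
- apply: functional_extensionality => k.
  have := congr1 (fun f => f k) e; rewrite /lc => ek.
  have -> : - c * p k + - c' * q k = - (c * p k + c' * q k) by ring.
  rewrite ek; ring.
- by rewrite oppr_ge0 ltW.
Qed.

Lemma normalize_neg2 (p q r0 r1 : vec R) :
  (exists c c' y y', ((c != 0) || (c' != 0)) /\ lc c c' p q = lc y y' r0 r1) ->
  exists c c' y y', [/\ ((c != 0) || (c' != 0)), lc c c' p q = lc y y' r0 r1 & c' <= 0].
Proof.
move=> [c [c' [y [y' [nz e]]]]].
case: (lerP c' 0) => hc; first by exists c, c', y, y'.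
exists (-c), (-c'), (-y), (-y'); split.
- by rewrite !oppr_eq0.
- apply: functional_extensionality => k.
  have := congr1 (fun f => f k) e; rewrite /lc => ek.
  have -> : - c * p k + - c' * q k = - (c * p k + c' * q k) by ring.
  rewrite ek; ring.
- by rewrite oppr_le0 ltW.
Qed.

Lemma row_in (A : 'M[R]_(2, 4)) (v : 'rV[R]_4) al be :
  (forall k, v 0 k = al * A ord0 k + be * A (inord 1) k) -> (v <= A)%MS.
Proof.
move=> E; apply/submxP; exists (\row_c (if c == ord0 then al else be)).
apply/rowP => k; rewrite E !mxE big_ord_recl big_ord1 !mxE /=.
have -> : lift ord0 ord0 = inord 1 :> 'I_2 by apply: val_inj; rewrite /= inordK.
done.
Qed.

Definition yvf (a1n a4 : vec R) (z : nat -> vec R) (j : nat) : vec R :=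
  if j == 0%N then a1n else if j == 1%N then a4 else z (j + 6)%N.
Definition Ymat d (a1n a4 : vec R) (z : nat -> vec R) : 'M[R]_(4, 2 * (d - 3)) :=
  \matrix_(k, j) yvf a1n a4 z (val j) (val k).

Lemma zcY d a1n a4 z : (forall k, a1n (val (inord k : 'I_4)) = a1n k) ->
  (forall k, a4 (val (inord k : 'I_4)) = a4 k) ->
  (forall m k, z m (val (inord k : 'I_4)) = z m k) ->
  forall j, (j < 2 * (d - 3))%N -> zc (Ymat d a1n a4 z) j = yvf a1n a4 z j.
Proof.
move=> h1 h4 hz j hj; apply: functional_extensionality => k.
rewrite /zc (ent_ord _ _ hj) mxE /= /yvf.
by case: eqP => _; [|case: eqP => _]; rewrite ?h1 ?h4 ?hz.
Qed.

Lemma TPY_lemma d (z : nat -> vec R) (a1n a4 : vec R) :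
  (5 <= d)%N -> TPz z (2 * d) ->
  (forall k, a1n (val (inord k : 'I_4)) = a1n k) ->
  (forall k, a4 (val (inord k : 'I_4)) = a4 k) ->
  (forall m k, z m (val (inord k : 'I_4)) = z m k) ->
  (forall a b c, (8 <= a)%N -> (a < b)%N -> (b < c)%N -> (c < 2 * d)%N ->
    0 < det4 a4 (z a) (z b) (z c)) ->
  (forall a b c, (8 <= a)%N -> (a < b)%N -> (b < c)%N -> (c < 2 * d)%N ->
    0 < det4 a1n (z a) (z b) (z c)) ->
  (forall a b, (8 <= a)%N -> (a < b)%N -> (b < 2 * d)%N -> 0 < det4 a1n a4 (z a) (z b)) ->
  totally_positive (Ymat d a1n a4 z).
Proof.
move=> hd TPz0 h1 h4 hz ClA ClB ClC f fm.
rewrite detcolsub.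
have lt : forall i j : nat, (i < j < 4)%N -> (f (inord i) < f (inord j))%N.
  move=> i j /andP [hij hj]; apply: fm; rewrite !inordK //; lia.
have h01 := lt 0%N 1%N isT. have h12 := lt 1%N 2%N isT. have h23 := lt 2%N 3%N isT.
have h3 : (f (inord 3) < 2 * (d - 3))%N := ltn_ord _.
rewrite !zcY //; try (apply: leq_trans h3; lia).
move: h01 h12 h23 h3.
set g0 := nat_of_ord (f (inord 0)). set g1 := nat_of_ord (f (inord 1)).
set g2 := nat_of_ord (f (inord 2)). set g3 := nat_of_ord (f (inord 3)).
move=> h01 h12 h23 h3.
rewrite /yvf.
have g2n0 : (g2 == 0%N) = false by apply/eqP; lia.
have g2n1 : (g2 == 1%N) = false by apply/eqP; lia.
have g3n0 : (g3 == 0%N) = false by apply/eqP; lia.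
have g3n1 : (g3 == 1%N) = false by apply/eqP; lia.
rewrite g2n0 g2n1 g3n0 g3n1.
have g1n0 : (g1 == 0%N) = false by apply/eqP; lia.
rewrite g1n0.
case: eqP => e0.
  case: eqP => e1.
    apply: ClC; lia.
  apply: ClB; lia.
have g1n1 : (g1 == 1%N) = false by apply/eqP; lia.
rewrite g1n1.
case: eqP => e1.
  apply: ClA; lia.
apply: TPz0; lia.
Qed.

Lemma entY_late d a1n a4 (Z : 'M[R]_(4, 2 * d)) k j :
  (2 <= j)%N -> (j < 2 * (d - 3))%N -> ent (Ymat d a1n a4 (zc Z)) k j = ent Z k (j + 6)%N.
Proof.
move=> h2 hj; rewrite (ent_ord _ _ hj) mxE /= /yvf.
have -> : (j == 0%N) = false by apply/eqP; lia.
have -> : (j == 1%N) = false by apply/eqP; lia.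
by rewrite /zc inord_val.
Qed.

Lemma span2Y_eq d a1n a4 (Z : 'M[R]_(4, 2 * d)) i : (1 <= i)%N -> (i < d - 3)%N ->
  span2 (Ymat d a1n a4 (zc Z)) (2 * i) (2 * i).+1 = span2 Z (2 * (i + 3)) (2 * (i + 3)).+1.
Proof.
move=> h1 h2; apply/matrixP => r k; rewrite !mxE.
rewrite !entY_late; try lia.
have -> : (2 * i + 6 = 2 * (i + 3))%N by lia.
by have -> : ((2 * i).+1 + 6 = (2 * (i + 3)).+1)%N by lia.
Qed.

Lemma entY01 d a1n a4 (z : nat -> vec R) k : (5 <= d)%N ->
  ent (Ymat d a1n a4 z) k 0 = a1n (val k) /\ ent (Ymat d a1n a4 z) k 1 = a4 (val k).
Proof.
move=> hd.
have h0 : (0 < 2 * (d - 3))%N by lia.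
have h1 : (1 < 2 * (d - 3))%N by lia.
by rewrite (ent_ord _ _ h0) (ent_ord _ _ h1) !mxE /yvf /=.
Qed.

Lemma L_eq d (L : 'M[R]_(2, 4)) (a1n a4 w1 w2 : vec R) z p q s t : (5 <= d)%N ->
  a1n = lc p q (fun k => L ord0 (inord k)) (fun k => L (inord 1) (inord k)) ->
  a4 = lc s t (fun k => L ord0 (inord k)) (fun k => L (inord 1) (inord k)) ->
  det4 a1n a4 w1 w2 != 0 ->
  (L == span2 (Ymat d a1n a4 z) 0 1)%MS.
Proof.
move=> hd ea eb dn.
set r0 : vec R := fun k => L ord0 (inord k).
set r1 : vec R := fun k => L (inord 1) (inord k).
set S := span2 (Ymat d a1n a4 z) 0 1.
have S0 : forall k, S ord0 k = a1n (val k).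
  by move=> k; rewrite /S mxE /=; case: (entY01 a1n a4 z k hd).
have S1 : forall k, S (inord 1) k = a4 (val k).
  by move=> k; rewrite /S mxE /= inordK //; case: (entY01 a1n a4 z k hd).
have ra : forall k : 'I_4, a1n (val k) = p * L ord0 k + q * L (inord 1) k.
  by move=> k; rewrite ea /lc /r0 /r1 !inord_val.
have rb : forall k : 'I_4, a4 (val k) = s * L ord0 k + t * L (inord 1) k.
  by move=> k; rewrite eb /lc /r0 /r1 !inord_val.
have ord2 : forall r : 'I_2, r = ord0 \/ r = inord 1.
  case=> [[|[|//]] hr]; [left|right]; apply: val_inj => //=; by rewrite inordK.
set D := p * t - q * s.
have Dn : D != 0.
  apply/negP => /eqP D0.
  have f1 : lc t (-q) a1n a4 = (fun _ => 0).
    apply: functional_extensionality => k; rewrite ea eb /lc.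
    have -> : t * (p * r0 k + q * r1 k) + - q * (s * r0 k + t * r1 k) = D * r0 k by rewrite /D; ring.
    by rewrite D0 mul0r.
  have f2 : lc (-s) p a1n a4 = (fun _ => 0).
    apply: functional_extensionality => k; rewrite ea eb /lc.
    have -> : - s * (p * r0 k + q * r1 k) + p * (s * r0 k + t * r1 k) = D * r1 k by rewrite /D; ring.
    by rewrite D0 mul0r.
  case: (boolP ((t != 0) || (- q != 0))) => [nz|]; first exact: (indep2 nz dn f1).
  move=> /norP [/negPn/eqP t0 /negPn/eqP q0].
  case: (boolP ((- s != 0) || (p != 0))) => [nz|]; first exact: (indep2 nz dn f2).
  move=> /norP [/negPn/eqP s0 /negPn/eqP p0].
  have q0' : q = 0 by rewrite -[q]opprK q0 oppr0.
  have f3 : lc 1 0 a1n a4 = (fun _ => 0).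
    apply: functional_extensionality => k; rewrite ea /lc p0 q0'; ring.
  by apply: (indep2 _ dn f3); rewrite oner_eq0.
apply/andP; split; apply/row_subP => r; case: (ord2 r) => ->.
- apply: (row_in (al := t / D) (be := - q / D)) => k.
  rewrite mxE S0 S1 ra rb /D; field; exact: Dn.
- apply: (row_in (al := - s / D) (be := p / D)) => k.
  rewrite mxE S0 S1 ra rb /D; field; exact: Dn.
- by apply: (row_in (al := p) (be := q)) => k; rewrite mxE S0 ra.
- by apply: (row_in (al := s) (be := t)) => k; rewrite mxE S1 rb.
Qed.
End Main.


Unset Implicit Arguments.
Theorem lemma9p3 (R : realType) (d : nat) (Z : 'M[R]_(4, 2 * d))
    (L : 'M[R]_(2, 4)) :
  (5 <= d)%N ->
  totally_positive Z ->
  \rank L = 2%N ->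
  (forall i : nat, (i < 4)%N -> lines_meet L (span2 Z (2 * i) (2 * i).+1)) ->
  positive_config (d - 3)
    (fun i : nat => if i == 0%N then L
                    else span2 Z (2 * (i + 3)) (2 * (i + 3)).+1).
Proof.
move=> hd TPZ rkL Hm.
pose z := zc Z.
have TPz0 : TPz z (2 * d) := TPz_of_TP TPZ.
pose r0 : vec R := fun k => L ord0 (inord k).
pose r1 : vec R := fun k => L (inord 1) (inord k).
have ext : forall i, (i < 4)%N -> exists c c' y y', ((c != 0) || (c' != 0)) /\
     lc c c' (z (2 * i)%N) (z (2 * i).+1) = lc y y' r0 r1.
  move=> i hi; have [v [nz [sL sM]]] := meet_vec (Hm i hi).
  have [c [c' [nzc e1]]] := span2_vec nz sM.
  have [y [y' Ey]] := sub_rows sL.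
  exists c, c', y, y'; split => //.
  rewrite -e1 /lc /r0 /r1; apply: functional_extensionality => k; exact: Ey.
have ext0 : exists c c' y y', ((c != 0) || (c' != 0)) /\ lc c c' (z 0%N) (z 1%N) = lc y y' r0 r1
  := ext 0%N isT.
have ext1 : exists c c' y y', ((c != 0) || (c' != 0)) /\ lc c c' (z 2%N) (z 3%N) = lc y y' r0 r1
  := ext 1%N isT.
have ext2 : exists c c' y y', ((c != 0) || (c' != 0)) /\ lc c c' (z 4%N) (z 5%N) = lc y y' r0 r1
  := ext 2%N isT.
have ext3 : exists c c' y y', ((c != 0) || (c' != 0)) /\ lc c c' (z 6%N) (z 7%N) = lc y y' r0 r1
  := ext 3%N isT.
have [c0 [c1 [y0 [y0' [nz0 e0 c1n]]]]] := normalize_neg2 ext0.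
have [c2 [c3 [y2 [y2' [nz2 e2]]]]] := ext1.
have [c4 [c5 [y4 [y4' [nz4 e4]]]]] := ext2.
have [c6 [c7 [y6 [y6' [nz6 e6 c6p]]]]] := normalize_pos ext3.
have dz : forall i, (i < 4)%N -> det4 (z (2 * i)%N) (z (2 * i).+1) (z 8%N) (z 9%N) != 0.
  move=> i hi; apply: lt0r_neq0; apply: TPz0; lia.
have nzy0 := nonzero_coef nz0 (dz 0%N isT) e0.
have nzy2 := nonzero_coef nz2 (dz 1%N isT) e2.
have nzy4 := nonzero_coef nz4 (dz 2%N isT) e4.
have nzy6 := nonzero_coef nz6 (dz 3%N isT) e6.
have d01 := meet_det nzy0 (esym e0).
have d23 := meet_det nzy2 (esym e2).
have d45 := meet_det nzy4 (esym e4).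
have d67 := meet_det nzy6 (esym e6).

pose a4 : vec R := lc c6 c7 (z 6%N) (z 7%N).
pose a1n : vec R := lc (-c0) (-c1) (z 0%N) (z 1%N).
have Qa4 : forall a b c, Qf (fun i => z (frg a b c i)) (lc c6 c7 (z 6%N) (z 7%N)) = 0.
  move=> a b c; rewrite e6.
  exact: (Qzero_L (u := fun i => z (frg a b c i)) y6 y6' nz2 (esym e2) d01 d45).
have ea1 : lc (-c1) (-c0) (neg (z 1%N)) (neg (z 0%N)) = lc y0 y0' r0 r1.
  rewrite -e0; apply: functional_extensionality => k; rewrite /lc /neg; ring.
have Qa1 : forall a b c, Qf (fun i => if (i < 8)%N then neg (z (7 - i)%N) else z (frh a b c i))
   (lc (-c1) (-c0) (neg (z 1%N)) (neg (z 0%N))) = 0.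
  move=> a b c; rewrite ea1.
  have nz5 : (-c5 != 0) || (-c4 != 0) by rewrite !oppr_eq0 orbC.
  have e5 : lc y4 y4' r0 r1 = lc (-c5) (-c4) (neg (z 5%N)) (neg (z 4%N)).
    rewrite -e4; apply: functional_extensionality => k; rewrite /lc /neg; ring.
  have d76 : det4 r0 r1 (neg (z 7%N)) (neg (z 6%N)) = 0.
    have -> : det4 r0 r1 (neg (z 7%N)) (neg (z 6%N)) = - det4 r0 r1 (z 6%N) (z 7%N) by dring.
    by rewrite d67 oppr0.
  have d32 : det4 r0 r1 (neg (z 3%N)) (neg (z 2%N)) = 0.
    have -> : det4 r0 r1 (neg (z 3%N)) (neg (z 2%N)) = - det4 r0 r1 (z 2%N) (z 3%N) by dring.
    by rewrite d23 oppr0.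
  exact: (Qzero_L (u := fun i => if (i < 8)%N then neg (z (7 - i)%N) else z (frh a b c i))
            y0 y0' nz5 e5 d76 d32).
have N8 : (8 <= 2 * d)%N by clear -hd; lia.
have nz6' : (c6 != 0) || (c7 != 0) := nz6.
have nz1' : (-c1 != 0) || (-c0 != 0) by rewrite !oppr_eq0 orbC.
have c1p : 0 <= -c1 by rewrite oppr_ge0.
have ClA : forall a b c, (8 <= a)%N -> (a < b)%N -> (b < c)%N -> (c < 2 * d)%N ->
    0 < det4 a4 (z a) (z b) (z c).
  move=> a b c ha hab hbc hc.
  have hb' : (b < 2 * d)%N := ltn_trans hbc hc.
  have ha' : (a < 2 * d)%N := ltn_trans hab hb'.
  have TP : TPn (fun i => z (frg a b c i)) 11.
    apply: TP_frame TPz0 _ _.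
      by apply: frg_mono => //; apply/orP; right.
    by apply: frg_bnd.
  exact: (lemA TP c6p nz6' (Qa4 a b c)).
have ClA2 : forall w, (8 <= w)%N -> (w < 2 * d)%N -> 0 < det4 a4 (z 0%N) (z 1%N) (z w).
  move=> w hw hw2.
  have TP : TPn (fun i => z (frg w w w i)) 9.
    apply: TP_frame TPz0 _ _.
      by apply: frg_mono.
    by apply: frg_bnd.
  exact: (lemA2 TP c6p nz6' (Qa4 w w w)).
have ClB : forall a b c, (8 <= a)%N -> (a < b)%N -> (b < c)%N -> (c < 2 * d)%N ->
    0 < det4 a1n (z a) (z b) (z c).
  move=> a b c ha hab hbc hc.
  have hb' : (b < 2 * d)%N := ltn_trans hbc hc.
  have ha' : (a < 2 * d)%N := ltn_trans hab hb'.
  have hb8 : (8 <= b)%N := leq_trans ha (ltnW hab).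
  have hc8 : (8 <= c)%N := leq_trans hb8 (ltnW hbc).
  have TP : TPn (fun i => if (i < 8)%N then neg (z (7 - i)%N) else z (frh a b c i)) 11.
    apply: TP_twist TPz0 _ N8 _ _ => //.
      by apply: frh_mono => //; apply/orP; right.
    by apply: frh_bnd.
  have := lemA TP c1p nz1' (Qa1 a b c).
  have -> : det4 a1n (z a) (z b) (z c) =
     det4 (lc (-c1) (-c0) (neg (z 1%N)) (neg (z 0%N))) (z c) (z b) (z a) by rewrite /a1n; dring.
  by [].
have ClB2 : forall w, (8 <= w)%N -> (w < 2 * d)%N -> 0 < det4 a1n (z 6%N) (z 7%N) (z w).
  move=> w hw hw2.
  have TP : TPn (fun i => if (i < 8)%N then neg (z (7 - i)%N) else z (frh w w w i)) 9.
    apply: TP_twist TPz0 _ N8 _ _ => //.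
      by apply: frh_mono.
    by apply: frh_bnd.
  have := lemA2 TP c1p nz1' (Qa1 w w w).
  have -> : det4 a1n (z 6%N) (z 7%N) (z w) =
     det4 (lc (-c1) (-c0) (neg (z 1%N)) (neg (z 0%N))) (neg (z 7%N)) (neg (z 6%N)) (z w)
     by rewrite /a1n; dring.
  by [].
have ClC : forall a b, (8 <= a)%N -> (a < b)%N -> (b < 2 * d)%N -> 0 < det4 a1n a4 (z a) (z b).
  move=> a b ha hab hb.
  have ha' : (a < 2 * d)%N := ltn_trans hab hb.
  have TP : TPn (fun i => z (frg a b b i)) 10.
    apply: TP_frame TPz0 _ _.
      by apply: frg_mono => //; apply/orP; right.
    by apply: frg_bnd.
  exact: (lemC TP c1p c6p (ClA2 a ha (ltn_trans hab hb)) (ClA2 b (leq_trans ha (ltnW hab)) hb)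
             (ClB2 a ha (ltn_trans hab hb)) (ClB2 b (leq_trans ha (ltnW hab)) hb)).
have zin : forall m k, z m (val (inord k : 'I_4)) = z m k by move=> m k; rewrite /z /zc inord_val.
have a1in : forall k, a1n (val (inord k : 'I_4)) = a1n k by move=> k; rewrite /a1n /lc !zin.
have a4in : forall k, a4 (val (inord k : 'I_4)) = a4 k by move=> k; rewrite /a4 /lc !zin.
have TPY : totally_positive (Ymat d a1n a4 z) := TPY_lemma hd TPz0 a1in a4in zin ClA ClB ClC.
have TPYz := TPz_of_TP TPY.
have ea1n : a1n = lc (-y0) (-y0') r0 r1.
  apply: functional_extensionality => k.
  have := congr1 (fun f => f k) e0; rewrite /a1n /lc => ek.
  have -> : - c0 * z 0%N k + - c1 * z 1%N k = - (c0 * z 0%N k + c1 * z 1%N k) by ring.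
  rewrite ek; ring.
have dn : det4 a1n a4 (z 8%N) (z 9%N) != 0.
  apply: lt0r_neq0; apply: ClC => //; clear -hd; lia.
have Leq : (L == span2 (Ymat d a1n a4 z) 0 1)%MS := L_eq z hd ea1n e6 dn.
have Neq : forall i, (i < d - 3)%N ->
   ((if i == 0%N then L else span2 Z (2 * (i + 3)) (2 * (i + 3)).+1)
      == span2 (Ymat d a1n a4 z) (2 * i) (2 * i).+1)%MS.
  move=> i hi; case: eqP => [->|ne]; first exact: Leq.
  have h1 : (1 <= i)%N by move: ne; clear; case: i.
  rewrite -(span2Y_eq a1n a4 Z h1 hi).
  by apply/andP; split; exact: submx_refl.
exists (2 * (d - 3))%N, (Ymat d a1n a4 z), (fun i => (2 * i)%N).
split; first exact: TPY.
split; first by move=> _; rewrite muln0.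
split; first by move=> i _; rewrite ltn_pmul2l.
split; first by move=> i hi; clear -hi; lia.
split; first exact: leqnn.
split; first exact: Neq.
move=> i hi hmeet; exfalso.
have hi' : (i < d - 3)%N by apply: ltnW.
have h := meet_eqmx (Neq i hi') (Neq i.+1 hi) hmeet.
have h3 : ((2 * i).+3 < 2 * (d - 3))%N by clear -hi; lia.
apply: (not_meet TPYz h3).
by rewrite mulnS in h.
Qed.
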